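(* Let $(X,\mathcal U)$ be a non-archimedean precompact uniform space and let $G\in\{F^{Prec}_{NA}(X,\mathcal U),F_{Pro}(X,\mathcal U)\}$ with universal map $i\colon X\to G$. Then: (1) $i\colon(X,\mathcal U)\to G$ is a uniform embedding; (2) $F^{Prec}_{NA}(X,\mathcal U)$ is algebraically the free group on $i(X)$; (3) $i(X)$ is a closed subspace of $F^{Prec}_{NA}(X,\mathcal U)$.
   Context: All uniform spaces and groups are Hausdorff; groups carry their two-sided uniformity. A uniform space is non-archimedean if it has a base of equivalence relations, precompact if for every entourage $\varepsilon$ some finite $A$ has $\varepsilon(A)=X$. A topological group is non-archimedean if it has a local base at the identity of open subgroups. $F^{Prec}_{NA}(X,\mathcal U)$ (resp. $F_{Pro}(X,\mathcal U)$) is the precompact non-archimedean (resp. profinite) group with uniformly continuous $i\colon X\to G$ such that every uniformly continuous map from $X$ into a precompact non-archimedean (resp. profinite) group factors uniquely as a continuous homomorphism composed with $i$. *)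

(* Defs.v *)
From HB Require Import structures.
From mathcomp Require Import all_boot all_order monoid.
From mathcomp Require Import all_classical all_reals topology.

Set Implicit Arguments.
Unset Strict Implicit.
Unset Printing Implicit Defensive.

Local Open Scope classical_set_scope.
Local Open Scope group_scope.

HB.mixin Record isTopGroup G of Group G & Topological G := {
  mul_continuous : continuous (fun p : G * G => p.1 * p.2);
  inv_continuous : continuous (fun x : G => x^-1)
}.

#[short(type="topGroupType")]
HB.structure Definition TopGroup := {G of isTopGroup G & Group G & Topological G}.

Section TopGroupDefs.
Variable G : topGroupType.

(* basic entourage of the two-sided uniformity associated with a
   neighbourhood U of the identity *)
Definition two_sided_ent (U : set G) : set (G * G) :=
  [set p | U (p.1^-1 * p.2) /\ U (p.2 * p.1^-1)].

Definition is_subgroup (H : set G) :=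
  H 1 /\ (forall x y, H x -> H y -> H (x * y)) /\ (forall x, H x -> H x^-1).

Definition na_group :=
  forall U : set G, nbhs (1 : G) U ->
    exists H : set G, [/\ is_subgroup H, open H & H `<=` U].

Definition precompact_group :=
  forall U : set G, nbhs (1 : G) U ->
    exists A : seq G, forall y : G, exists2 a, a \in A & two_sided_ent U (a, y).

Definition profinite_group :=
  [/\ hausdorff_space G, compact [set: G] & totally_disconnected [set: G]].

Definition prec_na_group := [/\ hausdorff_space G, precompact_group & na_group].
End TopGroupDefs.

Definition group_hom (G H : groupType) (f : G -> H) :=
  {morph f : x y / x * y}.

Definition equiv_rel_set (T : Type) (R : set (T * T)) :=
  [/\ (forall x, R (x, x)), (forall x y, R (x, y) -> R (y, x))
    & (forall x y z, R (x, y) -> R (y, z) -> R (x, z))].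

Definition na_uniform (X : uniformType) :=
  forall E, @entourage X E -> exists2 R, @entourage X R & equiv_rel_set R /\ R `<=` E.

Definition precompact_uniform (X : uniformType) :=
  forall E, @entourage X E ->
    exists A : seq X, forall y : X, exists2 a, a \in A & E (a, y).

Definition unif_cont_to_group (X : uniformType) (G : topGroupType) (f : X -> G) :=
  forall U : set G, nbhs (1 : G) U ->
    exists2 E, @entourage X E & forall x y, E (x, y) -> two_sided_ent U (f x, f y).

(* uniform embedding: injective uniform isomorphism onto the image
   (the image carrying the subspace uniformity) *)
Definition unif_embedding (X : uniformType) (G : topGroupType) (f : X -> G) :=
  [/\ injective f, unif_cont_to_group f &
      forall E, @entourage X E -> exists2 U : set G, nbhs (1 : G) U &
        forall x y, two_sided_ent U (f x, f y) -> E (x, y)].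

Definition free_universal (P : topGroupType -> Prop)
    (X : uniformType) (G : topGroupType) (i : X -> G) :=
  [/\ P G, unif_cont_to_group i &
      forall (H : topGroupType) (f : X -> H), P H -> unif_cont_to_group f ->
        exists phi : G -> H,
          [/\ group_hom phi, continuous phi, phi \o i = f &
              forall psi : G -> H, group_hom psi -> continuous psi ->
                psi \o i = f -> psi = phi]].

Definition is_FPrecNA := free_universal (@prec_na_group).
Definition is_FPro := free_universal (@profinite_group).

Definition free_group_on (G : groupType) (S : set G) :=
  forall (H : groupType) (f : G -> H),
    exists phi : G -> H, [/\ group_hom phi, {in S, phi =1 f} &
      forall psi : G -> H, group_hom psi -> {in S, psi =1 f} -> psi = phi].

(* Main.v *)
Require Import Defs.
From HB Require Import structures.
From mathcomp Require Import all_boot all_order monoid fingroup perm zify.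
From mathcomp Require Import all_classical all_reals topology.
Local Open Scope classical_set_scope.
Local Open Scope group_scope.
Set Implicit Arguments.
Unset Strict Implicit.

Definition DT (T : finGroupType) := discrete_topology T.
HB.instance Definition _ (T : finGroupType) := Group.copy (DT T) T.
HB.instance Definition _ (T : finGroupType) := DiscreteTopology.copy (DT T) (discrete_topology T).
HB.instance Definition _ (T : finGroupType) := Finite.copy (DT T) T.

Lemma disc_cont (T : finGroupType) (Y : topologicalType) (f : DT T -> Y) : continuous f.
Proof.
move=> a V /= Vf; rewrite nbhs_principalE /=; apply/principal_filterP => /=. exact: nbhs_singleton.
Qed.

Lemma disc_cont2 (T : finGroupType) (Y : topologicalType) (f : DT T * DT T -> Y) : continuous f.
Proof.
move=> [a b] V /= Vf.
exists ([set a], [set b]) => /=; first by split; apply: discrete_set1.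
by move=> [x y] [/= -> ->]; exact: nbhs_singleton.
Qed.

Section Inst.
Variable T : finGroupType.
Let mc : continuous (fun p : DT T * DT T => p.1 * p.2) := @disc_cont2 T (DT T) _.
Let ic : continuous (fun x : DT T => x^-1) := @disc_cont T (DT T) _.
HB.instance Definition _ := isTopGroup.Build (DT T) mc ic.
End Inst.

Lemma DT_prec (T : finGroupType) : prec_na_group (DT T) /\ profinite_group (DT T).
Proof.
split; split.
- exact: discrete_hausdorff.
- move=> U U1. exists (enum T) => y. exists y; first by rewrite mem_enum.
  have U1' : U 1 by exact: nbhs_singleton.
  by rewrite /two_sided_ent /= mulVg mulgV.
- move=> U U1; exists [set 1]; split.
  + split => //; split; first by move=> x y -> ->; rewrite mulg1.
    by move=> x ->; rewrite invg1.
  + exact: discrete_open.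
  + by move=> x ->; exact: nbhs_singleton.
- exact: discrete_hausdorff.
- by apply: finite_compact; exact: finite_finset.
- exact: zero_dimension_totally_disconnected discrete_zero_dimension.
Qed.


Section Words.
Variable T : eqType.

Definition lett (H : groupType) (g : T -> H) (p : T * bool) :=
  if p.2 then g p.1 else (g p.1)^-1.
Definition weval (H : groupType) (g : T -> H) (w : seq (T * bool)) :=
  foldr (fun p acc => lett g p * acc) 1 w.

Lemma weval_cat (H : groupType) (g : T -> H) u v :
  weval g (u ++ v) = weval g u * weval g v.
Proof. by elim: u => [|p u IH] /=; rewrite ?mul1g // IH mulgA. Qed.

Definition winv (w : seq (T * bool)) := rev (map (fun p => (p.1, ~~ p.2)) w).

Lemma weval_inv (H : groupType) (g : T -> H) w : weval g (winv w) = (weval g w)^-1.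
Proof.
elim: w => [|p w IH] /=; first by rewrite invg1.
rewrite /winv /= rev_cons -cats1 weval_cat -/(winv w) IH /= mulg1 invgM.
by congr (_ * _); rewrite /lett /=; case: p.2 => //=; rewrite invgK.
Qed.

Lemma hom1 (G H : groupType) (f : G -> H) : group_hom f -> f 1 = 1.
Proof.
move=> hf; have := hf 1 1; rewrite mulg1 => e.
by apply: (mulgI (f 1)); rewrite mulg1 -e.
Qed.

Lemma homV (G H : groupType) (f : G -> H) : group_hom f -> forall x, f x^-1 = (f x)^-1.
Proof.
move=> hf x; have := hf x x^-1; rewrite mulgV hom1 // => e.
by apply: (mulgI (f x)); rewrite mulgV -e.
Qed.

Lemma weval_hom (G H : groupType) (f : G -> H) (g : T -> G) w :
  group_hom f -> f (weval g w) = weval (f \o g) w.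
Proof.
move=> hf; elim: w => [|p w IH] /=; first exact: hom1.
rewrite hf IH /lett /=; case: p.2 => //; by rewrite homV.
Qed.

Definition canc (p q : T * bool) := (p.1 == q.1) && (p.2 != q.2).
Definition reduced (w : seq (T * bool)) := sorted (fun p q => ~~ canc p q) w.

Definition red (w : seq (T * bool)) :=
  foldr (fun p r => match r with
    | q :: r' => if canc p q then r' else p :: r
    | [::] => [:: p] end) [::] w.

Lemma weval_red (H : groupType) (g : T -> H) w : weval g (red w) = weval g w.
Proof.
elim: w => [|p w IH] //=; rewrite -IH.
case: (red w) => [|q r] //=.
case: ifP => //= /andP [/eqP e ne]; rewrite mulgA.
suff -> : lett g p * lett g q = 1 by rewrite mul1g.
rewrite /lett -e; case: p e ne => x [] /= e; case: q.2 => //= _;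
  by rewrite ?mulgV ?mulVg.
Qed.

Lemma red_reduced w : reduced (red w).
Proof.
elim: w => [|p w IH] //=.
move: IH; rewrite /reduced; case: (red w) => [|q r] //= IH.
case: ifP => [_|/negbT nc]; first by move: IH; case: r => //= ? ? /andP [].
by rewrite /= nc IH.
Qed.

End Words.
Section Ext.
Local Close Scope classical_set_scope.
Lemma pinj_ext (S : finType) (pm : S -> option S) :
  (forall p q y, pm p = Some y -> pm q = Some y -> p = q) ->
  exists s : {perm S}, forall p y, pm p = Some y -> s p = y.
Proof.
move=> pinj.
pose D := [set p | pm p != None]; pose f p := odflt p (pm p).
have finj : {in D &, injective f}.
  move=> p q; rewrite !inE /f; case ep: (pm p) => [y|] //; case eq: (pm q) => [z|] //= _ _ e.
  by subst z; exact: pinj ep eq.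
pose e1 := enum (~: D); pose e2 := enum (~: (f @: D)).
have se : size e1 = size e2.
  by rewrite /e1 /e2 -!cardE [LHS]cardsCs [RHS]cardsCs !finset.setCK card_in_imset.
pose F p := if p \in D then f p else nth p e2 (index p e1).
have nthin p : p \notin D -> nth p e2 (index p e1) \in e2.
  move=> pD; apply: mem_nth; rewrite -se index_mem /e1 mem_enum inE; exact: pD.
have Finj : injective F.
  move=> p q; rewrite /F; case: ifP => pD; case: ifP => qD.
  - exact: finj.
  - move=> e; have := nthin q (negbT qD); rewrite -e /e2 mem_enum inE.
    by rewrite imset_f.
  - move=> e; have := nthin p (negbT pD); rewrite e /e2 mem_enum inE.
    by rewrite imset_f.
  - have ip : index p e1 < size e2 by rewrite -se index_mem /e1 mem_enum inE pD.
    have iq : index q e1 < size e2 by rewrite -se index_mem /e1 mem_enum inE qD.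
    rewrite (set_nth_default q p ip) => /eqP; rewrite nth_uniq ?enum_uniq // => /eqP e.
    rewrite -(nth_index p (x:=p) (s:=e1)) ?e ?nth_index //;
      by rewrite /e1 mem_enum inE ?pD ?qD.
exists (perm Finj) => p y ep; rewrite permE /F inE ep /=; by rewrite /f ep.
Qed.
End Ext.

Section RF.
Variable U : eqType.
Variable r : seq (U * bool).
Hypothesis rred : reduced r.
Let n := size r.

Definition pm (u : U) (p : 'I_n.+2) : option 'I_n.+2 :=
  if (p < n) && (nth (u, false) r p == (u, true)) then Some (inord p.+1)
  else if (0 < p) && (p <= n) && (nth (u, true) r p.-1 == (u, false)) then Some (inord p.-1)
  else if p == 0 :> nat then Some (inord n.+1) else None.

Lemma rcons_ok j d : j.+1 < n -> ~~ canc (nth d r j) (nth d r j.+1).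
Proof. by move=> lt; move/sortedP: rred; apply. Qed.

Lemma pm_cases u (p y : 'I_n.+2) : pm u p = Some y ->
  [\/ [/\ p < n, nth (u, false) r p = (u, true) & y = p.+1 :> nat],
      [/\ 0 < p, p <= n, nth (u, true) r p.-1 = (u, false) & y = p.-1 :> nat] |
      p = 0 :> nat /\ y = n.+1 :> nat].
Proof.
have K k : k <= n.+1 -> (inord k : 'I_n.+2) = k :> nat by move=> ?; rewrite inordK.
rewrite /pm; case: ifP => [/andP [pn /eqP rp]|_].
  by move=> [<-]; apply: Or31; split => //; rewrite K //; lia.
case: ifP => [/andP [/andP [p0 pn] /eqP rp]|_].
  by move=> [<-]; apply: Or32; split => //; rewrite K //; lia.
case: ifP => [/eqP p0|//].
by move=> [<-]; apply: Or33; split => //; rewrite K //; lia.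
Qed.

Lemma pm_inj u p q y : pm u p = Some y -> pm u q = Some y -> p = q.
Proof.
move=> /pm_cases hp /pm_cases hq; apply/val_inj => /=.
case: hp => [[pn rp yp]|[p0 pn rp yp]|[p0 yp]];
case: hq => [[qn rq yq]|[q0 qn rq yq]|[q0 yq]]; try lia.
- have := rcons_ok (j := p) (u, false) (ltac:(lia)).
  rewrite /canc (set_nth_default (u,true) (u,false) (_ : p.+1 < n)); last lia.
  have -> : p.+1 = q.-1 by lia.
  by rewrite rp rq /= eqxx.
- have := rcons_ok (j := q) (u, false) (ltac:(lia)).
  rewrite /canc (set_nth_default (u,true) (u,false) (_ : q.+1 < n)); last lia.
  have -> : q.+1 = p.-1 by lia.
  by rewrite rp rq /= eqxx.
Qed.

Lemma RF : exists sg : U -> {perm 'I_n.+2},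
  (weval sg r) (inord 0) = inord n /\
  forall u, sg u (inord 0) != inord n \/ r = [:: (u, true)].
Proof.
have ex u : exists s : {perm 'I_n.+2}, forall p y, pm u p = Some y -> s p = y.
  exact: pinj_ext (@pm_inj u).
pose sg u := proj1_sig (cid (ex u)).
have sgP u p y : pm u p = Some y -> sg u p = y := proj2_sig (cid (ex u)) p y.
have K k : k <= n.+1 -> (inord k : 'I_n.+2) = k :> nat by move=> ?; rewrite inordK.
exists sg; split.
  suff H k : k <= n -> (weval sg (drop (n - k) r)) (inord (n - k)) = inord n.
    by have := H n (leqnn n); rewrite subnn drop0.
  elim: k => [|k IH] kn.
    by rewrite subn0 drop_oversize //= perm1.
  set j := n - k.+1.
  have jn : j < n by rewrite /j; lia.
  have j1 : j.+1 = n - k by rewrite /j; lia.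
  case Ed: (drop j r) => [|[t b] rest].
    by move: (congr1 size Ed); rewrite size_drop /= -/n; lia.
  have := drop_nth (t, b) jn; rewrite Ed => -[rj erest].
  rewrite /= permM erest j1 -IH; last lia.
  congr (_ _); rewrite -j1 /lett /=.
  case: b rj Ed => rj Ed.
    apply: sgP; rewrite /pm K; last lia.
    rewrite jn /=.
    by rewrite (set_nth_default (t, true) (t, false) jn) -rj eqxx.
  apply: (canLR (permK (sg t))); apply/esym/sgP; rewrite /pm K; last lia.
  case: ifP => [/andP [j1n /eqP rj1]|_].
    have := rcons_ok (j := j) (t, false) j1n.
    by rewrite /canc -rj rj1 /= eqxx.
  by rewrite /= (set_nth_default (t, false) (t, true) jn) -rj eqxx /= jn.
move=> u.
have : pm u (inord 0) = Some (inord 1) /\ 0 < n /\ nth (u, false) r 0 = (u, true)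
       \/ pm u (inord 0) = Some (inord n.+1).
  rewrite /pm K //; case: ifP => [/andP [n0 /eqP r0]|_]; first by left.
  by right.
case => [[/sgP -> [n0 r0]]|/sgP ->].
  have [n1|n1] := eqVneq n 1%N; last first.
    by left; apply/negP => /eqP /(congr1 (@nat_of_ord _)); rewrite !K //; lia.
  right; move: n1 r0; rewrite /n; case: r rred => [|a [|b l]] //= _ _ ->. done.
by left; apply/negP => /eqP /(congr1 (@nat_of_ord _)); rewrite !K //; lia.
Qed.

End RF.

Section Unif.
Variable X : uniformType.
Hypothesis hX : hausdorff_space X.
Hypothesis naX : na_uniform X.

Lemma sep_pair (x y : X) : x <> y -> exists2 E, @entourage X E & ~ E (x, y).
Proof.
move=> nxy; apply: contrapT => nE; apply: nxy; apply: hX => A B nA nB.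
have [E entE sEA] : exists2 E, @entourage X E & xsection E x `<=` A.
  by rewrite -filter_from_entourageE in nA; case: nA => E ? ?; exists E.
exists y; split; last exact: nbhs_singleton.
apply: sEA; apply: contrapT => nExy; apply: nE; exists E => // h; apply: nExy; rewrite /xsection /= inE; exact: h.
Qed.

Lemma sep_list (l : seq (X * X)) : (forall p, p \in l -> p.1 <> p.2) ->
  exists2 E, @entourage X E & forall p, p \in l -> ~ E p.
Proof.
elim: l => [|[a b] l IH] H.
  by exists setT => //; exact: entourageT.
have [E1 e1 nE1] := sep_pair (H (a,b) (mem_head _ _)).
have [E2 e2 nE2] : exists2 E, @entourage X E & forall p, p \in l -> ~ E p.
  by apply: IH => p pl; apply: H; rewrite in_cons pl orbT.
exists (E1 `&` E2); first exact: filterI.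
move=> p; rewrite in_cons => /orP [/eqP ->|pl] [] //.
by move=> _ /(nE2 _ pl).
Qed.

Lemma sep_equiv (s : seq X) : exists2 R, @entourage X R &
  equiv_rel_set R /\ forall x y, x \in s -> y \in s -> R (x, y) -> x = y.
Proof.
pose l := [seq p <- [seq (a, b) | a <- s, b <- s] | p.1 != p.2].
have [E eE nE] : exists2 E, @entourage X E & forall p, p \in l -> ~ E p.
  by apply: sep_list => p; rewrite mem_filter => /andP [/eqP].
have [R eR [eqR RE]] := naX eE.
exists R => //; split => // x y xs ys Rxy; apply: contrapT => nxy.
apply: (nE (x, y)); last exact: RE.
by rewrite mem_filter /=; apply/andP; split; [apply/eqP|apply/allpairsP; exists (x, y)].
Qed.

End Unif.

Definition gen (T : eqType) (G : groupType) (i : T -> G) : set G :=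
  [set g | exists w, weval i w = g].

Section Sub.
Variable X : uniformType.
Variable G : topGroupType.
Variable i : X -> G.

Lemma gen1 : gen i 1. Proof. by exists [::]. Qed.
Lemma genM a b : gen i a -> gen i b -> gen i (a * b).
Proof. by move=> [u <-] [v <-]; exists (u ++ v); rewrite weval_cat. Qed.
Lemma genV a : gen i a -> gen i a^-1.
Proof. by move=> [u <-]; exists (winv u); rewrite weval_inv. Qed.

Definition SG : Type := set_type (gen i).
HB.instance Definition _ := Choice.copy SG (set_type (gen i)).
HB.instance Definition _ := Topological.copy SG (set_type (gen i)).

Definition sgv (a : SG) : G := set_val a.
Lemma sgvP (a : SG) : gen i (sgv a). Proof. exact: set_valP. Qed.
Definition mkSG (g : G) (h : gen i g) : SG := SigSub (mem_set h).
Lemma mkSGK g h : sgv (@mkSG g h) = g. Proof. by []. Qed.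
Lemma sgv_inj : injective sgv.
Proof. by move=> a b e; apply/val_inj. Qed.

Definition sg_one : SG := mkSG gen1.
Definition sg_mul (a b : SG) : SG := mkSG (genM (sgvP a) (sgvP b)).
Definition sg_inv (a : SG) : SG := mkSG (genV (sgvP a)).

Lemma sg_mulA : associative sg_mul.
Proof. by move=> a b c; apply: sgv_inj; rewrite !mkSGK mulgA. Qed.
Lemma sg_mul1 : left_id sg_one sg_mul.
Proof. by move=> a; apply: sgv_inj; rewrite !mkSGK mul1g. Qed.
Lemma sg_mulg1 : right_id sg_one sg_mul.
Proof. by move=> a; apply: sgv_inj; rewrite !mkSGK mulg1. Qed.
Lemma sg_mulV : left_inverse sg_one sg_inv sg_mul.
Proof. by move=> a; apply: sgv_inj; rewrite !mkSGK mulVg. Qed.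
Lemma sg_mulgV : right_inverse sg_one sg_inv sg_mul.
Proof. by move=> a; apply: sgv_inj; rewrite !mkSGK mulgV. Qed.

HB.instance Definition _ := isGroup.Build SG sg_mulA sg_mul1 sg_mulg1 sg_mulV sg_mulgV.

Lemma sgvM (a b : SG) : sgv (a * b) = sgv a * sgv b. Proof. by []. Qed.
Lemma sgvV (a : SG) : sgv a^-1 = (sgv a)^-1. Proof. by []. Qed.
Lemma sgv1 : sgv 1 = 1. Proof. by []. Qed.

Lemma sgv_cont : continuous sgv.
Proof. exact: initial_continuous. Qed.

End Sub.

Lemma cont_pair (A B C D : topologicalType) (f : A -> C) (g : B -> D) :
  continuous f -> continuous g -> continuous (fun p : A * B => (f p.1, g p.2)).
Proof.
move=> cf cg [a b]; apply: cvg_pair => /=.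
  exact: (@continuous_comp _ _ _ fst f (a, b) (@cvg_fst _ _ _ _ _) (cf a)).
exact: (@continuous_comp _ _ _ snd g (a, b) (@cvg_snd _ _ _ _ _) (cg b)).
Qed.

Section SubTop.
Variable X : uniformType.
Variable G : topGroupType.
Variable i : X -> G.

Lemma sg_mulc : continuous (fun p : SG i * SG i => p.1 * p.2).
Proof.
apply: (@continuous_comp_initial _ _ _ (@sgv _ _ i)).
have -> : sgv (i:=i) \o (fun p : SG i * SG i => p.1 * p.2) =
  (fun p : G * G => p.1 * p.2) \o (fun p : SG i * SG i => (sgv p.1, sgv p.2)) by [].
move=> p; apply: continuous_comp; last exact: mul_continuous.
exact: cont_pair (@sgv_cont _ _ i) (@sgv_cont _ _ i) p.
Qed.

Lemma sg_invc : continuous (fun a : SG i => a^-1).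
Proof.
apply: (@continuous_comp_initial _ _ _ (@sgv _ _ i)).
have -> : sgv (i:=i) \o (fun a : SG i => a^-1) = (fun g : G => g^-1) \o (@sgv _ _ i) by [].
move=> p; apply: continuous_comp; last exact: inv_continuous.
exact: sgv_cont.
Qed.

HB.instance Definition _ := isTopGroup.Build (SG i) sg_mulc sg_invc.
End SubTop.

Section SubProps.
Variable X : uniformType.
Variable G : topGroupType.
Variable i : X -> G.

Lemma sg_nbhs (a : SG i) (U : set (SG i)) : nbhs a U ->
  exists V : set G, [/\ open V, V (sgv a) & (@sgv _ _ i) @^-1` V `<=` U].
Proof.
rewrite nbhsE => -[B [oB Ba] BU].
case: oB => V oV eV; exists V; split => //; first by rewrite -eV in Ba.
by rewrite eV.
Qed.

Lemma sg_open (V : set G) : open V -> open ((@sgv _ _ i) @^-1` V).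
Proof. by move=> oV; move/continuousP: (@sgv_cont _ _ i); apply. Qed.

Lemma sg_prec : prec_na_group G -> prec_na_group (SG i).
Proof.
move=> [hG pG nG]; split.
- move=> p q cpq; apply: sgv_inj; apply: hG => A B nA nB.
  have nA' : nbhs p ((@sgv _ _ i) @^-1` A) := sgv_cont nA.
  have nB' : nbhs q ((@sgv _ _ i) @^-1` B) := sgv_cont nB.
  by have [z [Az Bz]] := cpq _ _ nA' nB'; exists (sgv z).
- move=> U /sg_nbhs [V [oV V1 sVU]].
  have [H [[H1 [HM HV]] oH HV']] := nG V (open_nbhs_nbhs (conj oV V1)).
  have [A cA] := pG H (open_nbhs_nbhs (conj oH H1)).
  pose pick (b : G) : option (SG i) :=
    match pselect (exists s : SG i, two_sided_ent H (b, sgv s)) with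
    | left e => Some (proj1_sig (cid e)) | right _ => None end.
  exists (pmap pick A) => y.
  have [b bA [b1 b2]] := cA (sgv y).
  have [s ps] : exists s, pick b = Some s.
    rewrite /pick; case: pselect => [e|ne]; first by eexists.
    by exfalso; apply: ne; exists y; split.
  exists s; first by rewrite mem_pmap; apply/mapP; exists b.
  move: ps; rewrite /pick; case: pselect => [e|//] [<-].
  case: (cid e) => t [/= t1 t2]; split; apply: sVU; apply: HV'; rewrite /= ?sgvM ?sgvV.
  + have -> : (sgv t)^-1 * sgv y = ((b^-1 * sgv t)^-1) * (b^-1 * sgv y).
      by rewrite invgM invgK -mulgA mulVKg.
    by apply: HM => //; apply: HV.
  + have -> : sgv y * (sgv t)^-1 = (sgv y * b^-1) * ((sgv t * b^-1)^-1).
      by rewrite invgM invgK -mulgA mulKg.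
    by apply: HM => //; apply: HV.
- move=> U /sg_nbhs [V [oV V1 sVU]].
  have [H [[H1 [HM HV]] oH HV']] := nG V (open_nbhs_nbhs (conj oV V1)).
  exists ((@sgv _ _ i) @^-1` H); split.
  + split; first exact: H1.
    by split => [x y hx hy|x hx]; rewrite /= ?sgvM ?sgvV; [apply: HM|apply: HV].
  + exact: sg_open.
  + by move=> x hx; apply: sVU; apply: HV'.
Qed.

End SubProps.

Lemma reduced_some (T : eqType) (r : seq (T * bool)) : reduced r ->
  reduced [seq (Some p.1, p.2) | p <- r].
Proof.
rewrite /reduced; case: r => [|p r0] //=.
elim: r0 p => [|q r0 IH] p //= /andP [c pr]; rewrite IH // andbT.
by move: c; rewrite /canc /=.
Qed.

Lemma weval_some (T : eqType) (H : groupType) (g : option T -> H) w :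
  weval g [seq (Some p.1, p.2) | p <- w] = weval (g \o Some) w.
Proof. by elim: w => [|p w IH] //=; rewrite IH. Qed.

Lemma single_some (T : eqType) (w : seq (T * bool)) o :
  [seq (Some p.1, p.2) | p <- w] = [:: (o, true)] -> exists a, w = [:: (a, true)].
Proof. by case: w => [|[a b] [|q w]] //= [_ ->]; exists a. Qed.

Section Main.
Variable X : uniformType.
Hypothesis hX : hausdorff_space X.
Hypothesis naX : na_uniform X.
Variable P : topGroupType -> Prop.
Hypothesis PDT : forall T : finGroupType, P (DT T).
Variable G : topGroupType.
Variable i : X -> G.
Hypothesis hU : free_universal P i.

Lemma ext_fin (T : finGroupType) (f : X -> DT T) (R : set (X * X)) :
  @entourage X R -> (forall x y, R (x, y) -> f x = f y) ->
  exists phi : G -> DT T, [/\ group_hom phi, continuous phi & forall x, phi (i x) = f x].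
Proof.
move=> eR fR; case: hU => _ _ /(_ (DT T) f (PDT T)) [].
  move=> U U1; exists R => // x y /fR ->.
  by rewrite /two_sided_ent /= mulVg mulgV; split; exact: nbhs_singleton.
by move=> phi [hp cp ep _]; exists phi; split => // x; rewrite -ep.
Qed.

Lemma cont_fiber (T : finGroupType) (phi : G -> DT T) t :
  continuous phi -> open (phi @^-1` [set t]).
Proof. by move/continuousP; apply; exact: discrete_open. Qed.

Lemma weval_eq_in (H : groupType) (g1 g2 : X -> H) w :
  (forall a, a \in map fst w -> g1 a = g2 a) -> weval g1 w = weval g2 w.
Proof.
elim: w => [|p w IH] //= e; rewrite IH; last by move=> a aw; apply: e; rewrite in_cons aw orbT.
by rewrite /lett e // mem_head.
Qed.

Lemma SEP (r : seq (X * bool)) : reduced r ->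
  exists phi : G -> DT {perm 'I_(size r).+2}, [/\ group_hom phi, continuous phi,
    (phi (weval i r)) (inord 0) = inord (size r) &
    forall x, (phi (i x)) (inord 0) != inord (size r) \/ exists a, r = [:: (a, true)]].
Proof.
move=> rr.
pose r' := [seq (Some p.1, p.2) | p <- r].
have rr' : reduced r'.
  by apply: reduced_some.
have [sg [sg0 sgu]] := RF rr'.
have sr : size r' = size r by rewrite size_map.
have [R eR [[Rr Rs Rt] Rsep]] := sep_equiv hX naX (map fst r).
pose ol (x : X) : option X := match pselect (exists a, a \in map fst r /\ R (a, x)) with
  | left e => Some (proj1_sig (cid e)) | right _ => None end.
have olL a : a \in map fst r -> ol a = Some a.
  move=> ar; rewrite /ol; case: pselect => [e|ne]; last by exfalso; apply: ne; exists a.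
  by case: (cid e) => b [br Rba] /=; congr Some; apply: Rsep.
have olR x y : R (x, y) -> ol x = ol y.
  move=> Rxy; rewrite /ol; case: pselect => [e|ne]; case: pselect => [e'|ne'] //.
  - case: (cid e) => a [ar Rax]; case: (cid e') => b [br Rby] /=; congr Some.
    by apply: Rsep => //; apply: Rt Rax (Rt _ _ _ Rxy (Rs _ _ Rby)).
  - by exfalso; case: e => a [ar Rax]; apply: ne'; exists a; split => //; exact: Rt Rax Rxy.
  - by exfalso; case: e' => a [ar Ray]; apply: ne; exists a; split => //; exact: Rt Ray (Rs _ _ Rxy).
rewrite -sr.
have [phi [hp cp ep]] := ext_fin (f := fun x => (sg (ol x) : DT _)) eR
  (fun x y Rxy => congr1 sg (olR x y Rxy)).
exists phi; split => //.
  rewrite weval_hom // -sg0; congr (fun s : {perm _} => s (inord 0)).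
  rewrite (@weval_eq_in _ (phi \o i) (sg \o Some)); last first.
    by move=> a ar /=; rewrite ep olL.
  by rewrite /r' weval_some.
move=> x; rewrite ep; case: (sgu (ol x)) => [->|]; first by left.
by move/single_some => ?; right.
Qed.

Lemma NZ (r : seq (X * bool)) : reduced r -> r != [::] -> weval i r != 1.
Proof.
move=> rr rn; apply/eqP => e1.
have [phi [hp _ e _]] := SEP rr.
move: e; rewrite e1 hom1 // perm1 => /(congr1 (@nat_of_ord _)).
by rewrite !inordK //; case: (r) rn.
Qed.

Lemma i_inj : injective i.
Proof.
move=> x y e; apply: contrapT => nxy.
have rr : reduced [:: (x, true); (y, false)].
  by rewrite /reduced /= /canc /= andbT; apply/negP => /andP [/eqP].
by have /eqP := NZ rr isT; apply; rewrite /= /lett /= e mulg1 mulgV.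
Qed.

Lemma weval_red1 w : weval i w = 1 -> red w = [::].
Proof.
move=> e; apply/eqP; apply: contraT => rn.
by have := NZ (red_reduced w) rn; rewrite weval_red e eqxx.
Qed.

Lemma generation : P (SG i) -> forall g, gen i g.
Proof.
move=> PSG; case: hU => PG uci univ.
have gx x : gen i (i x) by exists [:: (x, true)]; rewrite /= /lett /= mulg1.
pose i' x : SG i := mkSG (gx x).
have uci' : unif_cont_to_group i'.
  move=> U /sg_nbhs [V [oV V1 sVU]].
  have [E eE HE] := uci V (open_nbhs_nbhs (conj oV V1)).
  exists E => // x y /HE [h1 h2]; split; apply: sVU; rewrite /= ?sgvM ?sgvV //.
have [phi' [hp' cp' ep' _]] := univ (SG i) i' PSG uci'.
have [phi0 [_ _ _ u0]] := univ G i PG uci.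
have e1 : (@sgv _ _ i) \o phi' = phi0.
  apply: u0.
  - by move=> a b /=; rewrite hp' sgvM.
  - by move=> g; apply: continuous_comp; [exact: cp'|exact: sgv_cont].
  - by rewrite -compA ep'.
have e2 : id = phi0 by apply: u0 => // g.
move=> g; have := sgvP (phi' g).
by have -> : sgv (phi' g) = g by rewrite -[RHS]/(id g) e2 -e1.
Qed.

Lemma KEY (H : groupType) (f : G -> H) w : weval i w = 1 -> weval (f \o i) w = 1.
Proof. by move/weval_red1 => e; rewrite -weval_red e. Qed.

Lemma KEY2 (H : groupType) (f : G -> H) u v :
  weval i u = weval i v -> weval (f \o i) u = weval (f \o i) v.
Proof.
move=> e; have := @KEY H f (u ++ winv v).
rewrite !weval_cat !weval_inv e mulgV => /(_ erefl) e'.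
by rewrite -[LHS]mulg1 -(mulVg (weval (f \o i) v)) mulgA e' mul1g.
Qed.

Lemma free_on : P (SG i) -> free_group_on (range i).
Proof.
move=> PSG H f.
have gn := generation PSG.
pose wrd g := proj1_sig (cid (gn g)).
have wrdP g : weval i (wrd g) = g := proj2_sig (cid (gn g)).
exists (fun g => weval (f \o i) (wrd g)); split.
- move=> a b /=; rewrite -weval_cat; apply: KEY2.
  by rewrite weval_cat !wrdP.
- move=> y /set_mem [x _ <-] /=.
  rewrite (@KEY2 _ f _ [:: (x, true)]); first by rewrite /= /lett /= mulg1.
  by rewrite wrdP /= /lett /= mulg1.
- move=> psi hpsi epsi; apply: funext => g.
  rewrite -{1}(wrdP g) weval_hom //; apply: weval_eq_in => a _ /=.
  by apply: epsi; apply: mem_set; exists a.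
Qed.

Lemma closed_range : P (SG i) -> closed (range i).
Proof.
move=> PSG; rewrite -openC openE => g ng.
have [w ew] := generation PSG g.
have rr := red_reduced w.
have [phi [hp cp e0 eo]] := SEP rr.
rewrite /interior; apply: (@filterS _ _ _ (phi @^-1` [set phi g])).
  move=> z /= ez [x _ exz]; case: (eo x) => [|[a ea]].
    by rewrite exz ez -ew -weval_red e0 eqxx.
  by apply: ng; exists a => //; rewrite -ew -weval_red ea /= /lett /= mulg1.
exact: open_nbhs_nbhs (conj (cont_fiber _ cp) erefl).
Qed.

Hypothesis pX : precompact_uniform X.

Lemma embed : unif_embedding i.
Proof.
case: (hU) => _ uci _; split => //; first exact: i_inj.
move=> E eE; have [R eR [[Rr Rs Rt] RE]] := naX eE.
have [A cA] := pX eR.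
pose cls x := find (fun a => `[< R (a, x) >]) A.
have clsR x : cls x < size A /\ R (nth x A (cls x), x).
  have [a aA Rax] := cA x.
  have hs : has (fun a => `[< R (a, x) >]) A by apply/hasP; exists a => //; apply/asboolP.
  by split; [rewrite -has_find|exact: (asboolW (nth_find x hs))].
have clsE x y : R (x, y) -> cls x = cls y.
  move=> Rxy; apply: eq_find => a; apply/asboolP/asboolP => h.
    exact: Rt h Rxy.
  exact: Rt h (Rs _ _ Rxy).
pose f x : DT {perm 'I_(size A).+1} := tperm (inord 0) (inord (cls x)).
have [phi [hp cp ep]] := ext_fin (f := f) eR (fun x y Rxy => congr1 (fun k => tperm (inord 0) (inord k)) (clsE x y Rxy)).
exists (phi @^-1` [set 1]).
  by apply: open_nbhs_nbhs; split; [exact: cont_fiber|rewrite /= hom1].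
move=> x y [/= h _]; apply: RE.
move: h; rewrite hp homV // !ep => e.
have fe : f y = f x by rewrite -[f y](mulKVg (f x)) e mulg1.
have ce : cls y = cls x.
  have := congr1 (fun s : {perm 'I_(size A).+1} => s (inord 0)) fe; rewrite /f /= !tpermL.
  move/(congr1 (@nat_of_ord _)); rewrite !inordK //; last 2 first.
  - by have [? _] := clsR x; lia.
  - by have [? _] := clsR y; lia.
have [cx Rx] := clsR x; have [_ Ry] := clsR y.
move: Ry; rewrite ce (set_nth_default x y cx) => Ry.
exact: Rt (Rs _ _ Rx) Ry.
Qed.

End Main.

Local Close Scope group_scope.

Theorem theorem3p12 (X : uniformType) :
  hausdorff_space X -> na_uniform X -> precompact_uniform X ->
  (forall (G : topGroupType) (i : X -> G), is_FPrecNA i ->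
     [/\ unif_embedding i, free_group_on (range i) & closed (range i)]) /\
  (forall (G : topGroupType) (i : X -> G), is_FPro i -> unif_embedding i).
Proof.
move=> hX naX pX; split.
- move=> G i hU.
  have PDT : forall T : finGroupType, prec_na_group (DT T) by move=> T; case: (DT_prec T).
  have PSG : prec_na_group (SG i) by apply: sg_prec; case: hU.
  split.
  + exact: (embed hX naX PDT hU pX).
  + exact: (free_on hX naX PDT hU PSG).
  + exact: (closed_range hX naX PDT hU PSG).
- move=> G i hU.
  have PDT : forall T : finGroupType, profinite_group (DT T) by move=> T; case: (DT_prec T).
  exact: (embed hX naX PDT hU pX).
Qed.
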